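(* Let $N$ be a Niemeier lattice rationally generated by roots, let $R=\bigoplus_{k\in\Omega}R_k$ be its maximal root system decomposed into irreducible components, so that $N\subset R^\vee=\bigoplus_kR_k^\vee$, and for $v\in N$ let $v_k\in R_k^\vee$ be its orthogonal projection. If $l\in N$ satisfies $l^2=4$ and $l\cdot\hbar=4$ for some $\hbar\in N$, and $l\bmod R\neq0$ in $R^\vee/R$, then for every $k\in\Omega$ the vector $l_k$ is a vector of minimal square in its class $l_k+R_k\subset R_k^\vee$.
   Context: A Niemeier lattice is a positive definite even unimodular lattice of rank $24$. A root is a vector of square $2$. The maximal root system $R\subset N$ is the sublattice generated by all roots of $N$; it decomposes uniquely into an orthogonal sum of irreducible root systems $R_k$ (of types $A_n,D_n,E_6,E_7,E_8$). *)

(* Defs.v *)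
(* A rank-24 lattice is modelled, up to isometry, as Z^24
   with an integral Gram matrix G; we work inside Q^24 = 'rV[rat]_24. *)
From HB Require Import structures.
From mathcomp Require Import all_boot all_order all_algebra.
From Stdlib Require Import Relations.
Set Implicit Arguments. Unset Strict Implicit. Unset Printing Implicit Defensive.
Import Order.TTheory GRing.Theory Num.Theory.
Local Open Scope ring_scope.

Section Defs.
Variable n : nat.

Definition lform (G : 'M[int]_n) (x y : 'rV[rat]_n) : rat :=
  (x *m map_mx intr G *m y^T) 0 0.

Definition isint (x : 'rV[rat]_n) : Prop := forall i, x 0 i \is a Num.int.

Definition even_unimodular_posdef (G : 'M[int]_n) : Prop :=
  [/\ G^T = G,
      forall i, (2 %| G i i)%Z,
      \det G = 1 &
      forall x : 'rV[rat]_n, x != 0 -> 0 < lform G x x].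

Definition is_root (G : 'M[int]_n) (v : 'rV[rat]_n) : Prop :=
  isint v /\ lform G v v = 2.

Definition root_adj (G : 'M[int]_n) (u v : 'rV[rat]_n) : Prop :=
  [/\ is_root G u, is_root G v & lform G u v != 0].

Definition component (G : 'M[int]_n) (r0 : 'rV[rat]_n) (v : 'rV[rat]_n) : Prop :=
  is_root G v /\ clos_refl_trans _ (root_adj G) r0 v.

Inductive zspan (S : 'rV[rat]_n -> Prop) : 'rV[rat]_n -> Prop :=
| zspan0 : zspan S 0
| zspanD : forall s x, S s -> zspan S x -> zspan S (s + x)
| zspanB : forall s x, S s -> zspan S x -> zspan S (x - s).

Inductive qspan (S : 'rV[rat]_n -> Prop) : 'rV[rat]_n -> Prop :=
| qspan0 : qspan S 0
| qspanD : forall (c : rat) s x, S s -> qspan S x -> qspan S (c *: s + x).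

Definition orth_proj (G : 'M[int]_n) (S : 'rV[rat]_n -> Prop)
  (v w : 'rV[rat]_n) : Prop :=
  qspan S w /\ forall s, S s -> lform G (v - w) s = 0.

End Defs.

(* Main.v *)
Require Import Defs.
From HB Require Import structures.
From mathcomp Require Import all_boot all_order all_algebra.
From Stdlib Require Import Relations.
From mathcomp Require Import ring lra.
Import Order.TTheory GRing.Theory Num.Theory.
Local Open Scope ring_scope.

Section L.
Variable G : 'M[int]_24.
Notation lf := (lform G).

Lemma lfDl x y z : lf (x + y) z = lf x z + lf y z.
Proof. by rewrite /lform !mulmxDl mxE. Qed.
Lemma lfDr x y z : lf x (y + z) = lf x y + lf x z.
Proof. by rewrite /lform linearD /= mulmxDr mxE. Qed.
Lemma lfZl c x y : lf (c *: x) y = c * lf x y.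
Proof. by rewrite /lform -!scalemxAl mxE. Qed.
Lemma lfNl x y : lf (- x) y = - lf x y.
Proof. by rewrite -scaleN1r lfZl mulN1r. Qed.
Lemma lfC (hs : G^T = G) x y : lf x y = lf y x.
Proof.
rewrite /lform -[in LHS](trmxK (x *m _ *m _)) [in LHS]mxE.
by rewrite !trmx_mul trmxK map_trmx hs mulmxA.
Qed.
Lemma lfNr (hs : G^T = G) x y : lf x (- y) = - lf x y.
Proof. by rewrite lfC // lfNl lfC. Qed.
Lemma lfBr (hs : G^T = G) x y z : lf x (y - z) = lf x y - lf x z.
Proof. by rewrite lfDr lfNr. Qed.

Lemma lf_int x y : isint x -> isint y -> lf x y \is a Num.int.
Proof.
move=> hx hy; rewrite /lform !mxE; apply: rpred_sum => j _.
rewrite !mxE; apply: rpredM; last exact: hy.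
apply: rpred_sum => i _; rewrite !mxE; apply: rpredM; first exact: hx.
exact: intr_int.
Qed.
Lemma isintD (x y : 'rV[rat]_24) : isint x -> isint y -> isint (x + y).
Proof. by move=> hx hy i; rewrite mxE rpredD. Qed.
Lemma isintN (x : 'rV[rat]_24) : isint x -> isint (- x).
Proof. by move=> hx i; rewrite mxE rpredN. Qed.
Lemma isint0 : isint (0 : 'rV[rat]_24).
Proof. by move=> i; rewrite mxE. Qed.

Lemma zspanN (S : 'rV[rat]_24 -> Prop) x : zspan S x -> zspan S (- x).
Proof.
elim=> [|s y hs _ ih|s y hs _ ih]; first by rewrite oppr0; constructor.
  by rewrite opprD addrC; apply: zspanB.
by rewrite opprB; apply: zspanD.
Qed.
Lemma zspanDD (S : 'rV[rat]_24 -> Prop) x y : zspan S x -> zspan S y -> zspan S (x + y).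
Proof.
move=> hx hy; elim: hx => [|s z hs _ ih|s z hs _ ih]; first by rewrite add0r.
  by rewrite -addrA; apply: zspanD.
by rewrite addrAC; apply: zspanB.
Qed.
Lemma zspan1 (S : 'rV[rat]_24 -> Prop) s : S s -> zspan S s.
Proof. by move=> hs; rewrite -[s]addr0; apply: zspanD => //; constructor. Qed.

Hypothesis hs : G^T = G.

Lemma zspan_comp r0 x : zspan (component G r0) x ->
  [/\ zspan (is_root G) x, isint x & exists k : int, lf x x = (2 * k)%:~R].
Proof.
elim=> [|s y [[ir ns] _] _ [z iy [k hk]]|s y [[ir ns] _] _ [z iy [k hk]]].
- split; [constructor| exact: isint0| exists 0]; by rewrite /lform mul0mx !mxE big1 // => i _; rewrite mxE mul0r.
- have [m hm] := intrP (lf_int _ _ ir iy).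
  split; [exact: zspanD | exact: isintD| exists (1 + m + k)%R].
  rewrite !lfDl !lfDr (lfC hs y s) ns hk hm; rewrite !(intrD, intrM) /=.
  ring.
- have [m hm] := intrP (lf_int _ _ ir iy).
  split; [exact: zspanB | apply: isintD => //; exact: isintN| exists (1 - m + k)%R].
  rewrite !lfDl !lfDr !lfNl !(lfNr hs) (lfC hs y s) ns hk hm; rewrite !(intrD, intrM, intrN) /=.
  ring.
Qed.
End L.
From mathcomp Require Import zify.

Theorem lemma4p1 (G : 'M[int]_24)
  (hN : even_unimodular_posdef G)
  (hgen : forall x : 'rV[rat]_24, qspan (is_root G) x)
  (l hbar : 'rV[rat]_24) (hl : isint l) (hhbar : isint hbar)
  (hl2 : lform G l l = 4) (hlh : lform G l hbar = 4)
  (hnotR : ~ zspan (is_root G) l)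
  (r0 : 'rV[rat]_24) (hr0 : is_root G r0)
  (lk : 'rV[rat]_24) (hlk : orth_proj G (component G r0) l lk) :
  forall x : 'rV[rat]_24, zspan (component G r0) x ->
    lform G lk lk <= lform G (lk + x) (lk + x).
Proof.
case: hN => hs _ _ hpos.
move=> x hx; have [hxR ix [k hk]] := zspan_comp G hs _ _ hx.
have orth : lform G (l - lk) x = 0.
  case: hlk => _ hlk; elim: hx {hxR ix hk} => [|s y h _ ih|s y h _ ih].
  - by rewrite /lform trmx0 mulmx0 mxE.
  - by rewrite lfDr ih hlk // addr0.
  - by rewrite (lfBr G hs) ih hlk // subr0.
have [m hm] := intrP (lf_int G _ _ hl ix).
have hlkx : lform G lk x = m%:~R.
  by move: orth; rewrite lfDl lfNl hm => /eqP; rewrite subr_eq0 => /eqP <-.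
suff h : 0 <= m + k.
  rewrite !lfDl !lfDr (lfC G hs x lk) hlkx hk.
  have : (0 : rat) <= (m + k)%:~R by rewrite ler0z.
  rewrite intrD intrM /=; lra.
case: (lerP 0 (m + k)) => // hneg; exfalso.
set y := l + x.
have hy : lform G y y = (2 * (2 + m + k))%:~R.
  rewrite /y !lfDl !lfDr (lfC G hs x l) hl2 hm hk !(intrD, intrM) /=; ring.
case: (eqVneq y 0) => [y0|ny0].
  apply: hnotR; have -> : l = - x by apply/eqP; rewrite -addr_eq0 -/y y0.
  exact: zspanN.
have := hpos _ ny0; rewrite hy ltr0z => hp.
have e : m + k = -1 by lia.
have ry : is_root G y.
  split; first exact: isintD.
  by rewrite hy -addrA e.
apply: hnotR; have -> : l = y + - x by rewrite /y addrK.
apply: zspanDD; [exact: zspan1 | exact: zspanN].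
Qed.
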